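(* Let $\{\Theta_n\}_{n\ge0}$ be an insertional family of lattice congruences, $\Theta_n$ a congruence on the weak order on $S_n$. Then the injective linear map $c:\mathbb{K}[Z^\Theta_\infty]\to\mathbb{K}[S_\infty]$ satisfies $(c\otimes c)\circ\Delta_Z=\Delta_S\circ c$, so $c$ embeds $(\mathbb{K}[Z^\Theta_\infty],\Delta_Z)$ as a subcoalgebra of $(\mathbb{K}[S_\infty],\Delta_S)$.
   Context: $S_n$ is the set of permutations of $[n]$ in one-line notation $x=x_1\cdots x_n$ with the (right) weak order ($x\le y$ iff the set of inverted value pairs of $x$ is contained in that of $y$), a lattice. The standardization $\mathrm{st}(a_1,\dots,a_k)$ of a sequence of distinct integers is the $u\in S_k$ with $u_i<u_j\iff a_i<a_j$ ($\mathrm{st}$ of the empty sequence is the empty permutation in $S_0$). For a congruence $\Theta_n$ on $S_n$, $\pi_\downarrow x$ is the minimum of the class of $x$. Insertional: for all $p,q\ge0$ and every $p$-element subset $Q\subseteq[p+q]$, let $\varphi_Q:S_p\times S_q\to S_{p+q}$ send $(u,v)$ to the unique $x$ with $\{x_1,\dots,x_p\}=Q$, $\mathrm{st}(x_1,\dots,x_p)=u$, $\mathrm{st}(x_{p+1},\dots,x_{p+q})=v$; the family is insertional if whenever $u\equiv u'\pmod{\Theta_p}$ and $v\equiv v'\pmod{\Theta_q}$, then $\varphi_Q(u,v)\equiv\varphi_Q(u',v')\pmod{\Theta_{p+q}}$. $\mathbb{K}$ is a field; $\mathbb{K}[S_\infty]=\bigoplus_n\mathbb{K}[S_n]$ with Malvenuto–Reutenauer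 coproduct $\Delta_S(x)=\sum_{p=0}^n\mathrm{st}(x_1,\dots,x_p)\otimes\mathrm{st}(x_{p+1},\dots,x_n)$. Let $Z_n=\{x\in S_n:\pi_\downarrow x=x\}$, $\mathbb{K}[Z^\Theta_\infty]=\bigoplus_n\mathbb{K}[Z_n]$. The map $c$ sends $x\in Z_n$ to the sum of the elements of its $\Theta_n$-class; $r:\mathbb{K}[S_\infty]\to\mathbb{K}[Z^\Theta_\infty]$ is the linear map fixing $x$ if $\pi_\downarrow x=x$ and sending $x$ to $0$ otherwise. The coproduct on $\mathbb{K}[Z^\Theta_\infty]$ is $\Delta_Z=(r\otimes r)\circ\Delta_S\circ c$. *)

(* Defs.v *)
From HB Require Import structures.
From mathcomp Require Import all_boot all_order all_fingroup all_algebra.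
Set Implicit Arguments. Unset Strict Implicit. Unset Printing Implicit Defensive.
Import GRing.Theory.
Local Open Scope ring_scope.

(* Permutations of [n] are 'S_n = {perm 'I_n}, values 0..n-1 (shifted by one
   from the paper's 1..n; harmless since only relative order matters). *)

Definition oneline n (x : 'S_n) : seq nat := [seq val (x i) | i <- enum 'I_n].

Definition st (s : seq nat) : seq nat :=
  [seq count (fun b => (b < a)%N) s | a <- s].

Definition inv_set n (x : 'S_n) : {set 'I_n * 'I_n} :=
  [set ab : 'I_n * 'I_n | (ab.1 < ab.2)%N && ((x^-1)%g ab.2 < (x^-1)%g ab.1)%N].

Definition weak_le n (x y : 'S_n) : bool := inv_set x \subset inv_set y.

Definition is_meet n (x y m : 'S_n) : Prop :=
  weak_le m x /\ weak_le m y /\ forall z, weak_le z x -> weak_le z y -> weak_le z m.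
Definition is_join n (x y m : 'S_n) : Prop :=
  weak_le x m /\ weak_le y m /\ forall z, weak_le x z -> weak_le y z -> weak_le m z.

Definition lattice_congruence n (th : rel 'S_n) : Prop :=
  equivalence_rel th /\
  (forall x y z m m', th x y -> is_meet x z m -> is_meet y z m' -> th m m') /\
  (forall x y z m m', th x y -> is_join x z m -> is_join y z m' -> th m m').

Definition is_phiQ p q (Q : {set 'I_(p + q)}) (u : 'S_p) (v : 'S_q)
    (x : 'S_(p + q)) : Prop :=
  [set x i | i : 'I_(p + q) & (i < p)%N] = Q /\
  st (take p (oneline x)) = oneline u /\
  st (drop p (oneline x)) = oneline v.

Definition insertional (th : forall n, rel 'S_n) : Prop :=
  forall p q (Q : {set 'I_(p + q)}) (u u' : 'S_p) (v v' : 'S_q) (x x' : 'S_(p + q)),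
    #|Q| = p -> th p u u' -> th q v v' ->
    is_phiQ Q u v x -> is_phiQ Q u' v' x' -> th (p + q) x x'.

Section Coalg.
Variables (K : fieldType) (th : forall n, rel 'S_n).

Definition isZ n (x : 'S_n) : bool := [forall y, th y x ==> weak_le x y].

(* degree-n component of K[S_oo]: {ffun 'S_n -> K} (coefficients);
   K[Z_n] = those supported on Z_n;
   component K[S_p] (x) K[S_q] of the tensor square: {ffun 'S_p * 'S_q -> K}. *)

Definition DeltaS n (f : {ffun 'S_n -> K}) p q : {ffun 'S_p * 'S_q -> K} :=
  [ffun uv => if (p + q == n)%N then
     \sum_(y : 'S_n | (st (take p (oneline y)) == oneline uv.1)
                      && (st (drop p (oneline y)) == oneline uv.2)) f y
   else 0].

(* c : sends x in Z_n to the sum of its class, extended linearly *)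
Definition cmap n (f : {ffun 'S_n -> K}) : {ffun 'S_n -> K} :=
  [ffun y => \sum_(x : 'S_n | isZ x && th x y) f x].

Definition rmap n (f : {ffun 'S_n -> K}) : {ffun 'S_n -> K} :=
  [ffun x => if isZ x then f x else 0].

Definition ctens p q (g : {ffun 'S_p * 'S_q -> K}) : {ffun 'S_p * 'S_q -> K} :=
  [ffun uv => \sum_(u' : 'S_p | isZ u' && th u' uv.1)
               \sum_(v' : 'S_q | isZ v' && th v' uv.2) g (u', v')].

Definition rtens p q (g : {ffun 'S_p * 'S_q -> K}) : {ffun 'S_p * 'S_q -> K} :=
  [ffun uv => if isZ uv.1 && isZ uv.2 then g uv else 0].

Definition DeltaZ n (f : {ffun 'S_n -> K}) p q : {ffun 'S_p * 'S_q -> K} :=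
  rtens (DeltaS (cmap f) p q).

End Coalg.

(* Main.v *)
Require Import Defs.
From HB Require Import structures.
From mathcomp Require Import all_boot all_order all_fingroup all_algebra.
From mathcomp Require Import zify.
Set Implicit Arguments. Unset Strict Implicit. Unset Printing Implicit Defensive.

Lemma cnt_enum n (P : pred 'I_n) : count P (enum 'I_n) = #|[set j | P j]|.
Proof. by rewrite cardsE cardE -size_filter /enum_mem filter_predT -enumT. Qed.

Lemma cnt_seq (s : seq nat) (P : pred nat) :
  count P s = #|[set j : 'I_(size s) | P (nth 0 s j)]|.
Proof.
rewrite -cnt_enum -{1}(mkseq_nth 0 s) /mkseq -val_enum_ord -map_comp count_map.
by apply: eq_count.
Qed.

Lemma card_lt n t : t <= n -> #|[set k : 'I_n | k < t]| = t.
Proof.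
move=> tn; rewrite -cnt_enum.
have -> : count (fun k : 'I_n => k < t) (enum 'I_n) = count (fun k => k < t) (map val (enum 'I_n)).
  by rewrite count_map.
by rewrite val_enum_ord -size_filter (filter_iota_ltn 0 tn) size_iota.
Qed.

Lemma rank_perm n (x : 'S_n) a : #|[set c | x c < x a]| = x a.
Proof.
have -> : [set c | x c < x a] = x @^-1: [set k : 'I_n | k < x a].
  by apply/setP => c; rewrite !inE.
by rewrite card_preimset ?card_lt //; [apply: ltnW | apply: perm_inj].
Qed.

Lemma nth_oneline n (y : 'S_n) (k : 'I_n) : nth 0 (oneline y) k = y k.
Proof. by rewrite /oneline (nth_map k) ?size_enum_ord // nth_ord_enum. Qed.

Lemma size_oneline n (y : 'S_n) : size (oneline y) = n.
Proof. by rewrite /oneline size_map size_enum_ord. Qed.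

Lemma st_iff (s : seq nat) p (w : 'S_p) (hs : size s = p) :
  (st s = oneline w) <-> (forall i j : 'I_p, (nth 0 s i < nth 0 s j) = (w i < w j)).
Proof.
have nst (i : 'I_p) : nth 0 (st s) i = #|[set j : 'I_p | nth 0 s j < nth 0 s i]|.
  rewrite /st (nth_map 0) ?hs // cnt_seq.
  move: (nth 0 s i) => a; case: _ / hs; done.
split.
- move=> E i j.
  have ri k : nat_of_ord (w k) = #|[set j : 'I_p | nth 0 s j < nth 0 s k]|.
    by rewrite -nth_oneline -E nst.
  rewrite !ri; case: (ltnP (nth 0 s i) (nth 0 s j)) => h.
  + apply/esym/proper_card; apply/properP; split.
      by apply/subsetP => k; rewrite !inE => /ltn_trans; apply.
    by exists i; rewrite !inE // ltnn.
  + apply/esym/negbTE; rewrite -leqNgt; apply: subset_leq_card.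
    by apply/subsetP => k; rewrite !inE => /leq_trans; apply.
- move=> H; apply: (@eq_from_nth _ 0); first by rewrite size_map size_oneline.
  move=> k; rewrite size_map hs => kp.
  have -> : k = Ordinal kp by [].
  rewrite nst nth_oneline -[RHS]rank_perm; apply: eq_card => j.
  by rewrite !inE H.
Qed.

Lemma ord_eq n (a b : 'I_n) : (a == b) = (nat_of_ord a == nat_of_ord b).
Proof. by []. Qed.

Lemma cover_inv n (w : 'S_n) (i j : 'I_n) : nat_of_ord j = i.+1 -> w i < w j ->
  inv_set (tperm i j * w)%g = (w i, w j) |: inv_set w.
Proof.
move=> ji wij; apply/setP => [[a b]]; rewrite !inE /=.
rewrite -(permKV w a) -(permKV w b); move: (w^-1 a)%g (w^-1 b)%g => A B.
rewrite invMg tpermV !permM !permK xpair_eqE !(inj_eq perm_inj).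
case: tpermP => [->|->|/eqP hA1 /eqP hA2]; case: tpermP => [->|->|/eqP hB1 /eqP hB2];
  rewrite ?eqxx ?andbT ?andbF ?orbF ?orbT ?wij //=.
all: repeat match goal with H : is_true (_ != _) |- _ => move: H end.
all: rewrite ?ord_eq; lia.
Qed.

Lemma trans_nat (P : pred nat) lo hi : lo < hi -> ~~ P lo -> P hi ->
  exists k, [/\ lo < k <= hi, ~~ P k.-1 & P k].
Proof.
elim: hi => // hi IH; rewrite ltnS leq_eqVlt => /orP[/eqP <-|lh] nl ph.
  by exists lo.+1; split => //; apply/andP; split.
case ph': (P hi).
  by have [k [/andP[k1 k2] k3 k4]] := IH lh nl ph'; exists k; rewrite k1 /= ltnW.
by exists hi.+1; rewrite ph'; split => //; apply/andP; split => //; apply: ltnW.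
Qed.

Lemma inv_mem n (x : 'S_n) a b : ((a, b) \in inv_set x) = (a < b) && ((x^-1)%g b < (x^-1)%g a).
Proof. by rewrite inE. Qed.

Lemma KL n (x y z w : 'S_n) : weak_le z x -> weak_le z y -> weak_le w x -> weak_le w y ->
  ~~ weak_le z w ->
  exists i j : 'I_n, [/\ nat_of_ord j = i.+1, w i < w j,
     (w i, w j) \in inv_set x & (w i, w j) \in inv_set y].
Proof.
case: n x y z w => [|n] x y z w zx zy wx wy.
  by case/subsetPn => [[[]]].
case/subsetPn => [[a b]] zab wab.
have subx (c d : 'I_n.+1) : (c, d) \in inv_set z -> (c, d) \in inv_set x by move/(subsetP zx).
have suby (c d : 'I_n.+1) : (c, d) \in inv_set z -> (c, d) \in inv_set y by move/(subsetP zy).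
have wsubx (c d : 'I_n.+1) : (c, d) \in inv_set w -> (c, d) \in inv_set x by move/(subsetP wx).
have wsuby (c d : 'I_n.+1) : (c, d) \in inv_set w -> (c, d) \in inv_set y by move/(subsetP wy).
have ordeq (c d : 'I_n.+1) : (c == d) = (nat_of_ord c == nat_of_ord d) by [].
have Pneq (s : 'S_n.+1) (c d : 'I_n.+1) : c != d -> nat_of_ord (s c) != s d.
  by move=> cd; rewrite -ordeq (inj_eq perm_inj).
suff main : forall d (a b : 'I_n.+1), (w^-1)%g b - (w^-1)%g a <= d -> a < b ->
    (w^-1)%g a < (w^-1)%g b -> (z^-1)%g b < (z^-1)%g a ->
  exists i j : 'I_n.+1, [/\ nat_of_ord j = i.+1, w i < w j,
     (w i, w j) \in inv_set x & (w i, w j) \in inv_set y].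
  move: zab wab; rewrite !inv_mem => /andP[ab zba] /nandP[/negP//|].
  rewrite -leqNgt leq_eqVlt => /orP[/eqP e|wab]; last by apply: (main _ a b (leqnn _)).
  have eab : b = a by apply: (@perm_inj _ (w^-1)%g); apply: val_inj.
  by move: ab; rewrite eab ltnn.
clear a b zab wab.
elim=> [|d IH] a b hd ab wab zab; first by lia.
have /andP[_ xab] : (a < b) && ((x^-1)%g b < (x^-1)%g a).
  by rewrite -inv_mem; apply: subx; rewrite inv_mem ab zab.
have /andP[_ yab] : (a < b) && ((y^-1)%g b < (y^-1)%g a).
  by rewrite -inv_mem; apply: suby; rewrite inv_mem ab zab.
have [/existsP[k /andP[/andP[k1 k2] /orP[/andP[ac zc]|/andP[cb zc]]]]|good] :=
  boolP [exists k : 'I_n.+1, (((w^-1)%g a < k < (w^-1)%g b)) &&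
    (((a < w k) && ((z^-1)%g (w k) < (z^-1)%g a)) || ((w k < b) && ((z^-1)%g b < (z^-1)%g (w k))))].
- by apply: (IH a (w k)); rewrite ?permK //; lia.
- by apply: (IH (w k) b); rewrite ?permK //; lia.
have cls : forall k : 'I_n.+1, (w^-1)%g a < k < (w^-1)%g b ->
   (w k < a /\ (x^-1)%g a < (x^-1)%g (w k) /\ (y^-1)%g a < (y^-1)%g (w k)) \/
   (b < w k /\ (x^-1)%g (w k) < (x^-1)%g b /\ (y^-1)%g (w k) < (y^-1)%g b).
  move=> k kk; move/existsPn: good => /(_ k); rewrite kk /= negb_or !negb_and.
  case/andP=> h1 h2.
  have ca : nat_of_ord (w k) != a.
    rewrite -ordeq; apply/eqP => e; move: kk; rewrite -e permK; lia.
  have cb : nat_of_ord (w k) != b.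
    rewrite -ordeq; apply/eqP => e; move: kk; rewrite -e permK; lia.
  have zca := Pneq (z^-1)%g _ _ ca.
  case: (ltnP ((z^-1)%g (w k)) ((z^-1)%g a)) => zc.
  - rewrite zc orbF -leqNgt in h1.
    have : (w k, a) \in inv_set w by rewrite inv_mem permK; apply/andP; split; lia.
    move=> hw; move: (wsubx _ _ hw) (wsuby _ _ hw); rewrite !inv_mem => /andP[_ ?] /andP[_ ?].
    left; split; [lia|split=> //].
  - have zbc : (z^-1)%g b < (z^-1)%g (w k) by lia.
    rewrite zbc orbF -leqNgt in h2.
    have : (b, w k) \in inv_set w by rewrite inv_mem permK; apply/andP; split; lia.
    move=> hw; move: (wsubx _ _ hw) (wsuby _ _ hw); rewrite !inv_mem => /andP[_ ?] /andP[_ ?].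
    right; split; [lia|split=> //].
have [t [/andP[t1 t2] t3 t4]] : exists t, [/\ (w^-1)%g a < t <= (w^-1)%g b,
     ~~ (b <= w (inord t.-1)) & b <= w (inord t)].
  apply: (@trans_nat (fun t => b <= w (inord t))) wab _ _.
    by rewrite /= inord_val permKV -ltnNge.
  by rewrite /= inord_val permKV.
have tn : t < n.+1 by apply: leq_ltn_trans t2 _.
have tn' : t.-1 < n.+1 by lia.
set i : 'I_n.+1 := inord t.-1; set j : 'I_n.+1 := inord t.
have vi : nat_of_ord i = t.-1 by rewrite /i inordK.
have vj : nat_of_ord j = t by rewrite /j inordK.
have c0f : w i = a \/ (w i < a /\ (x^-1)%g a < (x^-1)%g (w i) /\ (y^-1)%g a < (y^-1)%g (w i)).
  case: (eqVneq t.-1 ((w^-1)%g a)) => e.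
    by left; rewrite /i e inord_val permKV.
  case: (cls i); first by rewrite vi; lia.
    by right.
  by move=> [bw _]; move: t3; rewrite /= -/i; lia.
have c1f : w j = b \/ (b < w j /\ (x^-1)%g (w j) < (x^-1)%g b /\ (y^-1)%g (w j) < (y^-1)%g b).
  case: (eqVneq t ((w^-1)%g b)) => e.
    by left; rewrite /j e inord_val permKV.
  case: (cls j); first by rewrite vj; lia.
    by move=> [bw _]; move: t4; rewrite /= -/j; lia.
  by right.
exists i, j; rewrite !inv_mem.
case: c0f => [->|[? [? ?]]]; case: c1f => [->|[? [? ?]]]; split; try lia;
  apply/andP; split; lia.
Qed.

Lemma inv_set_inj n (x y : 'S_n) : inv_set x = inv_set y -> x = y.
Proof.
move=> E; apply: invg_inj; apply/permP => a.
have ordeq (c d : 'I_n) : (c == d) = (nat_of_ord c == nat_of_ord d) by [].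
have key c : ((x^-1)%g c < (x^-1)%g a) = ((y^-1)%g c < (y^-1)%g a).
  have hx : ((c, a) \in inv_set x) = ((c, a) \in inv_set y) by rewrite E.
  have hy : ((a, c) \in inv_set x) = ((a, c) \in inv_set y) by rewrite E.
  move: hx hy; rewrite !inv_mem.
  case: (eqVneq c a) => [->|ca]; first by rewrite !ltnn.
  have nx : nat_of_ord ((x^-1)%g c) != (x^-1)%g a by rewrite -ordeq (inj_eq perm_inj).
  have ny : nat_of_ord ((y^-1)%g c) != (y^-1)%g a by rewrite -ordeq (inj_eq perm_inj).
  rewrite ordeq in ca; lia.
apply: val_inj; rewrite /= -rank_perm -[RHS]rank_perm; apply: eq_card => c.
by rewrite !inE key.
Qed.

Lemma weak_antisym n (x y : 'S_n) : weak_le x y -> weak_le y x -> x = y.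
Proof. by move=> h1 h2; apply: inv_set_inj; apply/eqP; rewrite eqEsubset; apply/andP. Qed.

Lemma weak_refl n (x : 'S_n) : weak_le x x.
Proof. exact: subxx. Qed.

Lemma weak_trans n (x y z : 'S_n) : weak_le x y -> weak_le y z -> weak_le x z.
Proof. exact: subset_trans. Qed.

Lemma inv_set1 n : inv_set (1 : 'S_n)%g = set0.
Proof. by apply/setP => [[a b]]; rewrite inv_mem inE invg1 !perm1; case: ltngtP. Qed.

Lemma meet_ex n (x y : 'S_n) : exists m, is_meet x y m.
Proof.
have h1 : weak_le 1%g x && weak_le 1%g y by rewrite /weak_le inv_set1 !sub0set.
case: (@arg_maxnP _ 1%g (fun m => weak_le m x && weak_le m y) (fun m => #|inv_set m|) h1) => m /andP[mx my] mmax.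
exists m; split=> //; split=> // z zx zy.
apply/contraT => nz.
have [i [j [ji wij hx hy]]] := KL zx zy mx my nz.
have cov := cover_inv ji wij.
have : weak_le (tperm i j * m)%g x && weak_le (tperm i j * m)%g y.
  by rewrite /weak_le cov !subUset !sub1set hx hy; apply/andP; split.
move/mmax; rewrite cov cardsU1.
have -> : (m i, m j) \notin inv_set m by rewrite inv_mem !permK ji; apply/negP => /andP[_]; lia.
by move=> /=; rewrite add1n ltnn.
Qed.

Unset Implicit Arguments.
Section Cong.
Variable (th : forall n, rel 'S_n).
Hypothesis hcong : forall n, lattice_congruence (th n).

Lemma th_refl {n : nat} (x : 'S_n) : th n x x.
Proof. by case: (hcong n) => /equivalence_relP[r _] _. Qed.

Lemma th_ltrans {n : nat} {x y : 'S_n} : th n x y -> th n x =1 th n y.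
Proof. by case: (hcong n) => /equivalence_relP[_ l] _; apply: l. Qed.

Lemma th_sym {n : nat} {x y : 'S_n} : th n x y -> th n y x.
Proof. by move/th_ltrans => /(_ x); rewrite th_refl => <-. Qed.

Lemma th_trans {n : nat} {x y z : 'S_n} : th n x y -> th n y z -> th n x z.
Proof. by move=> /th_ltrans ->. Qed.

Lemma classmin (n : nat) (u : 'S_n) : exists m, forall u', (isZ th u' && th n u' u) = (u' == m).
Proof.
have h0 : th n u u by apply: th_refl.
case: (@arg_minnP _ u (fun m => th n m u) (fun m => #|inv_set m|) h0) => m mu mmin.
have Zm : isZ th m.
  apply/forallP => y; apply/implyP => ym.
  have [w [wm [wy wmax]]] := meet_ex m y.
  have myy : is_meet y y y.
    by split; [apply: weak_refl|split; [apply: weak_refl|]].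
  have wy' : th n w y.
    by case: (hcong n) => _ [hm _]; apply: (hm m y y w y (th_sym ym)).
  have wu : th n w u by apply: th_trans wy' (th_trans ym mu).
  have := mmin _ wu.
  have := subset_leqif_cards wm.
  move=> [le eq] ge.
  have : inv_set w == inv_set m by rewrite -eq eqn_leq le ge.
  by move/eqP => E; rewrite /weak_le -E.
exists m => u'; apply/idP/idP.
- case/andP => Zu' u'u.
  have u'm : th n u' m by apply: th_trans u'u (th_sym mu).
  apply/eqP; apply: weak_antisym.
    by move/forallP: Zu' => /(_ m) /implyP; apply; apply: th_sym.
  by move/forallP: Zm => /(_ u') /implyP; apply.
- by move/eqP ->; rewrite Zm mu.
Qed.
End Cong.
Set Implicit Arguments.

Section Block.
Variables (p q : nat) (w1 : 'S_p) (w2 : 'S_q).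

Definition bfun (k : 'I_(p + q)) : 'I_(p + q) :=
  match split k with inl i => lshift q (w1 i) | inr j => rshift p (w2 j) end.

Lemma bfunL i : bfun (lshift q i) = lshift q (w1 i).
Proof. by rewrite /bfun (unsplitK (inl _ i : 'I_p + 'I_q)). Qed.

Lemma bfunR j : bfun (rshift p j) = rshift p (w2 j).
Proof. by rewrite /bfun (unsplitK (inr _ j : 'I_p + 'I_q)). Qed.

Lemma bfun_lt k : (bfun k < p) = (k < p).
Proof.
rewrite -(splitK k); case: (split k) => [i|j] /=.
  by rewrite bfunL /= !ltn_ord.
by rewrite bfunR /= !ltnNge !leq_addr.
Qed.

Lemma bfun_inj : injective bfun.
Proof.
move=> k1 k2; rewrite -(splitK k1) -(splitK k2).
case: (split k1) => [i1|j1]; case: (split k2) => [i2|j2] /=;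
  rewrite ?bfunL ?bfunR => /(congr1 val) /= e.
- by rewrite (perm_inj (val_inj e)).
- by move: (ltn_ord (w1 i1)); rewrite e ltnNge leq_addr.
- by move: (ltn_ord (w1 i2)); rewrite -e ltnNge leq_addr.
- by move/addnI/val_inj/perm_inj: e => ->.
Qed.

Definition bperm : 'S_(p + q) := perm bfun_inj.

Lemma bpermL i : bperm (lshift q i) = lshift q (w1 i).
Proof. by rewrite permE bfunL. Qed.
Lemma bpermR j : bperm (rshift p j) = rshift p (w2 j).
Proof. by rewrite permE bfunR. Qed.
Lemma bperm_lt k : (bperm k < p) = (k < p).
Proof. by rewrite permE bfun_lt. Qed.
End Block.

Definition PL p q (y : 'S_(p + q)) (u : 'S_p) : bool :=
  [forall i, forall j, (y (lshift q i) < y (lshift q j)) == (u i < u j)].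
Definition PR p q (y : 'S_(p + q)) (v : 'S_q) : bool :=
  [forall i, forall j, (y (rshift p i) < y (rshift p j)) == (v i < v j)].

Lemma takeE p q (y : 'S_(p + q)) (u : 'S_p) :
  (st (take p (oneline y)) == oneline u) = PL y u.
Proof.
have hs : size (take p (oneline y)) = p by rewrite size_takel // size_oneline leq_addr.
apply/eqP/idP.
- move/(st_iff _ hs) => H; apply/forallP => i; apply/forallP => j; apply/eqP.
  rewrite -H !nth_take //.
  by rewrite -(nth_oneline y (lshift q i)) -(nth_oneline y (lshift q j)).
- move=> H; apply/(st_iff _ hs) => i j; rewrite !nth_take //.
  rewrite (nth_oneline y (lshift q i)) (nth_oneline y (lshift q j)).
  by move/forallP: H => /(_ i) /forallP /(_ j) /eqP.
Qed.

Lemma dropE p q (y : 'S_(p + q)) (v : 'S_q) :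
  (st (drop p (oneline y)) == oneline v) = PR y v.
Proof.
have hs : size (drop p (oneline y)) = q by rewrite size_drop size_oneline addKn.
apply/eqP/idP.
- move/(st_iff _ hs) => H; apply/forallP => i; apply/forallP => j; apply/eqP.
  rewrite -H !nth_drop.
  by rewrite -(nth_oneline y (rshift p i)) -(nth_oneline y (rshift p j)).
- move=> H; apply/(st_iff _ hs) => i j; rewrite !nth_drop.
  rewrite (nth_oneline y (rshift p i)) (nth_oneline y (rshift p j)).
  by move/forallP: H => /(_ i) /forallP /(_ j) /eqP.
Qed.

Lemma PL_shift p q (w1 : 'S_p) (w2 : 'S_q) (y : 'S_(p + q)) (u : 'S_p) :
  PL (bperm w1 w2 * y)%g (w1 * u)%g = PL y u.
Proof.
apply/idP/idP => /forallP H; apply/forallP => i; apply/forallP => j.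
- rewrite -(permKV w1 i) -(permKV w1 j).
  move/forallP: (H (w1^-1 i)%g) => /(_ (w1^-1 j)%g).
  by rewrite !permM !bpermL.
- by rewrite !permM !bpermL; move/forallP: (H (w1 i)) => /(_ (w1 j)).
Qed.

Lemma PR_shift p q (w1 : 'S_p) (w2 : 'S_q) (y : 'S_(p + q)) (v : 'S_q) :
  PR (bperm w1 w2 * y)%g (w2 * v)%g = PR y v.
Proof.
apply/idP/idP => /forallP H; apply/forallP => i; apply/forallP => j.
- rewrite -(permKV w2 i) -(permKV w2 j).
  move/forallP: (H (w2^-1 i)%g) => /(_ (w2^-1 j)%g).
  by rewrite !permM !bpermR.
- by rewrite !permM !bpermR; move/forallP: (H (w2 i)) => /(_ (w2 j)).
Qed.

Lemma Qset_shift p q (w1 : 'S_p) (w2 : 'S_q) (y : 'S_(p + q)) :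
  [set (bperm w1 w2 * y)%g i | i : 'I_(p + q) & (i < p)%N] =
  [set y i | i : 'I_(p + q) & (i < p)%N].
Proof.
apply/setP => k; apply/imsetP/imsetP => [[i hi ->]|[i hi ->]].
- exists (bperm w1 w2 i); last by rewrite permM.
  by move: hi; rewrite !inE bperm_lt.
- exists ((bperm w1 w2)^-1 i)%g; last by rewrite permM permKV.
  by move: hi; rewrite !inE -(bperm_lt w1 w2 ((bperm w1 w2)^-1 i)%g) permKV.
Qed.

Unset Implicit Arguments.
Section Main.
Variables (K : fieldType) (th : forall n, rel 'S_n).
Hypothesis hcong : forall n, lattice_congruence (th n).
Hypothesis hins : insertional th.

Lemma th_rtrans {n : nat} {y y' : 'S_n} (x : 'S_n) : th n y y' -> th n x y = th n x y'.
Proof.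
move=> h; apply/idP/idP => h'.
  exact: (th_trans th hcong h' h).
exact: (th_trans th hcong h' (th_sym th hcong h)).
Qed.

Lemma sum_inv p q (u u' : 'S_p) (v v' : 'S_q) (g : 'S_(p + q) -> K) :
  th p u u' -> th q v v' -> (forall y y', th (p + q) y y' -> g y = g y') ->
  (\sum_(y | (st (take p (oneline y)) == oneline u) && (st (drop p (oneline y)) == oneline v)) g y =
  \sum_(y | (st (take p (oneline y)) == oneline u') && (st (drop p (oneline y)) == oneline v')) g y)%R.
Proof.
move=> hu hv hg.
pose w1 := (u' * u^-1)%g; pose w2 := (v' * v^-1)%g.
have e1 : u' = (w1 * u)%g by rewrite /w1 -mulgA mulVg mulg1.
have e2 : v' = (w2 * v)%g by rewrite /w2 -mulgA mulVg mulg1.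
rewrite [RHS](reindex_inj (mulgI (bperm w1 w2))) /=.
apply: eq_big => y.
  by rewrite !takeE !dropE e1 e2 PL_shift PR_shift.
move=> /andP[h1 h2]; apply: hg.
apply: (hins p q [set y i | i : 'I_(p + q) & (i < p)%N] u u' v v' y _ _ hu hv).
- rewrite card_imset; last exact: perm_inj.
  by rewrite card_lt // leq_addr.
- by split; [|split; apply/eqP].
- split; first exact: Qset_shift.
  by split; apply/eqP; rewrite ?takeE ?dropE ?e1 ?e2 ?PL_shift ?PR_shift -?takeE -?dropE.
Qed.
End Main.
Set Implicit Arguments.

Theorem theorem1p3 (K : fieldType) (th : forall n, rel 'S_n)
  (hcong : forall n, lattice_congruence (th n))
  (hins : insertional th) :
  forall n (f : {ffun 'S_n -> K}),
    (forall x, ~~ isZ th x -> f x = 0%R) ->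
    (cmap th f = 0%R -> f = 0%R) /\
    (forall p q, ctens th (DeltaZ th f p q) = DeltaS (cmap th f) p q).
Proof.
move=> n f hf; split.
- move=> hc; apply/ffunP => x.
  case Zx: (isZ th x); last by rewrite (hf x) ?Zx // ffunE.
  move: (congr1 (fun g : {ffun 'S_n -> K} => g x) hc) => /=.
  have [m Hm] := classmin th hcong _ x.
  rewrite ffunE (eq_bigl _ _ Hm) big_pred1_eq.
  have := Hm x; rewrite Zx (th_refl th hcong x) => /esym/eqP <-.
  by rewrite !ffunE.
- move=> p q; apply/ffunP => -[u v]; rewrite !ffunE /=.
  have [mu Hu] := classmin th hcong _ u; have [mv Hv] := classmin th hcong _ v.
  rewrite (eq_bigl _ _ Hu) big_pred1_eq (eq_bigl _ _ Hv) big_pred1_eq.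
  have := Hu mu; rewrite eqxx => /andP[Zmu thmu].
  have := Hv mv; rewrite eqxx => /andP[Zmv thmv].
  rewrite /DeltaZ !ffunE /= Zmu Zmv /=.
  case: eqP => // pqn; subst n.
  apply: (sum_inv K th hins) => //.
  move=> y y' hy; rewrite !ffunE; apply: eq_bigl => x.
  by rewrite (th_rtrans th hcong x hy).
Qed.
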